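(* Let $n$ be a positive integer. Every $\alpha \in \mathcal{M}_n$ can be realized as $\alpha=\mu_n(\xi,\xi')$ for some reals $\xi\neq\xi'$ for which the supremum defining $\mu_n(\xi,\xi')$ is attained at some $(s,t) \in \mathbb{Z}^2 \setminus \{0\}$.
   Context: For reals $\xi\ne\xi'$ and a positive integer $n$, $\mu_n(\xi,\xi') = \sup_{(s,t)\in\mathbb{Z}^2\setminus\{0\}} \dfrac{\gcd(t,n)\,|\xi-\xi'|}{|s-t\xi|\,|s-t\xi'|} \in\mathbb{R}\cup\{\infty\}$ (with $\gcd(0,n)=n$), and $\mathcal{M}_n$ is the set of finite values of $\mu_n(\xi,\xi')$ over pairs of reals $\xi\neq\xi'$. *)

(* Defs.v *)
From mathcomp Require Import all_boot all_order all_algebra.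
From mathcomp Require Import all_classical all_reals ereal.
Set Implicit Arguments. Unset Strict Implicit. Unset Printing Implicit Defensive.
Import Order.TTheory GRing.Theory Num.Theory.
Local Open Scope ring_scope.
Local Open Scope classical_set_scope.

(* When the denominator vanishes the numerator
   is positive (xi <> xi', n > 0), so the term is +oo. *)
Definition mu_term (R : realType) (n : nat) (xi xi' : R) (s t : int) : \bar R :=
  let den := `|s%:~R - t%:~R * xi| * `|s%:~R - t%:~R * xi'| in
  if den == 0 then +oo%E
  else (((gcdn `|t|%N n)%:R * `|xi - xi'|) / den)%:E.

Definition mu (R : realType) (n : nat) (xi xi' : R) : \bar R :=
  ereal_sup [set mu_term n xi xi' st.1 st.2 | st in [set st : int * int | st != (0, 0)]].

Definition Mset (R : realType) (n : nat) : set R :=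
  [set a | exists xi xi' : R, xi != xi' /\ mu n xi xi' = a%:E].

(* Main.v *)
Require Import Defs.
From mathcomp Require Import all_boot all_order all_algebra.
From mathcomp Require Import all_classical all_reals ereal.
From mathcomp Require Import topology normedtype sequences.
From mathcomp Require Import ring lra zify.
Set Implicit Arguments. Unset Strict Implicit. Unset Printing Implicit Defensive.
Import Order.TTheory GRing.Theory Num.Theory numFieldNormedType.Exports.
Local Open Scope ring_scope.
Local Open Scope classical_set_scope.
Lemma incr_ge (f : nat -> nat) : increasing_seq f -> forall k, (k <= f k)%N.
Proof.
move=> fi; elim => // k IH.
have : (f k < f k.+1)%N.
  have := increasing_seq_injective fi.
  move=> inj; rewrite ltn_neqAle; apply/andP; split.
    by apply/eqP => /inj /eqP; rewrite eqn_leq ltnn andbF.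
  by rewrite -leEnat fi.
by apply: leq_ltn_trans.
Qed.

Lemma incr_comp (f g : nat -> nat) : increasing_seq f -> increasing_seq g -> increasing_seq (f \o g).
Proof. by move=> hf hg x y /=; rewrite hf -!leEnat hg. Qed.

Lemma incr_cvg (f : nat -> nat) : increasing_seq f -> f @ \oo --> \oo.
Proof.
move=> fi; apply/cvgnyPge => A; near=> k.
apply: leq_trans (incr_ge fi k); near: k; exact: nbhs_infty_ge.
Unshelve. all: end_near. Qed.

Lemma extract (R : realType) (K : finType) (key : nat -> K) (u v : nat -> R) (M : R) :
  (forall k, `|u k| <= M) -> (forall k, `|v k| <= M) ->
  exists phi : nat -> nat, (forall k, (k <= phi k)%N) /\ (forall k, key (phi k) = key (phi 0%N)) /\
   exists l l' : R, (u \o phi) @ \oo --> l /\ (v \o phi) @ \oo --> l'.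
Proof.
move=> hu hv.
have [x [A Aoo Ax]] := finite_range_cst_subsequence (@finite_finset _ (range key)).
have Dfin : forall m : nat, finite_set [set y | (y <= m)%O].
  by move=> m; apply: sub_finite_set (finite_II m.+1) => k /=.
have [f [fi _ Af]] := infinite_increasing_seq_wf Dfin Aoo 0%N.
have bu : bounded_fun (u \o f).
  rewrite /=; apply/(@ex_bound _ _ _ _ _ (globally_properfilter (a := 0%N) I)); by exists M => k _ /=.
have [g gi cu] := bolzano_weierstrass bu.
have bv : bounded_fun (v \o (f \o g)).
  rewrite /=; apply/(@ex_bound _ _ _ _ _ (globally_properfilter (a := 0%N) I)); by exists M => k _ /=.
have [h hi cv] := bolzano_weierstrass bv.
have fgi := incr_comp fi gi.
have fghi := incr_comp fgi hi.
exists ((f \o g) \o h); split; first exact: incr_ge.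
split.
  by move=> k; rewrite /= !(proj1 (Ax _)) //; apply: Af.
exists (lim ((u \o f \o g) @ \oo)), (lim ((v \o (f \o g) \o h) @ \oo)); split.
  have := cvg_comp _ _ (incr_cvg hi) cu.
  by [].
exact: cv.
Qed.
Lemma lim_ineq (R : realType) (p q : nat -> R) (l l' c W : R) (s' t' : R) :
 p @ \oo --> l -> q @ \oo --> l' ->
 (forall k, W * `|p k - q k| <= c * (`|s' - t' * p k| * `|s' - t' * q k|)) ->
 W * `|l - l'| <= c * (`|s' - t' * l| * `|s' - t' * l'|).
Proof.
move=> cp cq H.
have cpn : (fun k => `|s' - t' * p k|) @ \oo --> `|s' - t' * l|.
  apply: cvg_norm; apply: cvgB; first exact: cvg_cst.
  exact: cvgMl_tmp.
have cqn : (fun k => `|s' - t' * q k|) @ \oo --> `|s' - t' * l'|.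
  apply: cvg_norm; apply: cvgB; first exact: cvg_cst.
  exact: cvgMl_tmp.
have cd : (fun k => W * `|p k - q k|) @ \oo --> W * `|l - l'|.
  apply: cvgMl_tmp; apply: cvg_norm; exact: cvgB.
have ce : (fun k => c * (`|s' - t' * p k| * `|s' - t' * q k|)) @ \oo --> c * (`|s' - t' * l| * `|s' - t' * l'|).
  apply: cvgMl_tmp; exact: cvgM.
rewrite -subr_ge0; apply: (cvgr_to_ge (cvgB ce cd)).
by near=> k; rewrite /= subr_ge0.
Unshelve. all: end_near. Qed.

Lemma lim_ge (R : realType) (p : nat -> R) (l a : R) :
 p @ \oo --> l -> (forall k, a <= p k + harmonic k) -> a <= l.
Proof.
move=> cp H.
have c : (fun k => p k + harmonic k) @ \oo --> l.
  rewrite -[l]addr0; apply: cvgD => //; exact: cvg_harmonic.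
apply: (cvgr_to_ge c); by near=> k; exact: H.
Unshelve. all: end_near. Qed.
Section S.
Variable R : realType.
Variable n : nat.

Definition tm (w d den : R) : \bar R := if den == 0 then +oo%E else (w*d/den)%:E.

Lemma mu_termE (x x' : R) s t : mu_term n x x' s t =
  tm (gcdn `|t|%N n)%:R `|x - x'| (`|s%:~R - t%:~R * x| * `|s%:~R - t%:~R * x'|).
Proof. by []. Qed.

Lemma alg1 (A B S T x s t : R) : S - T * x != 0 ->
  s - t * ((A * x + B) / (S - T * x)) = ((s * S - t * B) - (t * A + s * T) * x) / (S - T * x).
Proof. move=> h1; field; by rewrite h1. Qed.

Lemma alg2 (A B S T x x' : R) : S - T * x != 0 -> S - T*x' != 0 ->
 (A * x + B) / (S - T * x) - (A * x' + B) / (S - T * x') =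
  (A * S + B * T) * (x - x') / ((S - T * x) * (S - T * x')).
Proof. move=> h1 h2. field. by rewrite h1 h2. Qed.

Lemma alg3 (w E P : R) : E != 0 -> w * E^-1 * (E / P) = w / P.
Proof. move=> h; by rewrite -mulrA (mulrA E^-1) mulVf // mul1r. Qed.

Lemma alg4 (w X A B d d' : R) : d != 0 -> d' != 0 -> `|A| * `|B| != 0 ->
  w * `|X / (d * d')| / (`|A / d| * `|B / d'|) = w * `|X| / (`|A| * `|B|).
Proof.
move=> h1 h2 h3; rewrite !(normrM, normfV).
move: h3; rewrite mulf_eq0 negb_or => /andP[h3 h4].
have h5 : `|d| != 0 by rewrite normr_eq0.
have h6 : `|d'| != 0 by rewrite normr_eq0.
move: (`|d|) (`|d'|) (`|A|) (`|B|) h3 h4 h5 h6 => D D' a b h3 h4 h5 h6.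
field. by rewrite h3 h4 h5 h6.
Qed.

Lemma alg5 (A B d d' : R) : d != 0 -> d' != 0 ->
  (`|A / d| * `|B / d'| == 0) = (`|A| * `|B| == 0).
Proof.
move=> h1 h2; rewrite !normrM !normfV !mulf_eq0 !invr_eq0 !normr_eq0.
by rewrite (negPf h1) (negPf h2) !orbF.
Qed.

Lemma transfer (x x' : R) (al be s0 t0 s t : int) :
  al*s0 + be*t0 = 1 -> s0%:~R - t0%:~R*x != 0 -> s0%:~R - t0%:~R*x' != 0 ->
  let y := (al%:~R*x + be%:~R)/(s0%:~R - t0%:~R*x) in
  let y' := (al%:~R*x' + be%:~R)/(s0%:~R - t0%:~R*x') in
  tm (gcdn (absz (t*al + s*t0)) n)%:R `|y - y'| (`|s%:~R - t%:~R*y| * `|s%:~R - t%:~R*y'|)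
  = mu_term n x x' (s*s0 - t*be) (t*al + s*t0).
Proof.
move=> h dn dn' y y'.
have hR : al%:~R * s0%:~R + be%:~R * t0%:~R = 1 :> R.
  by rewrite -!intrM -intrD h.
rewrite /y /y' alg1 // alg1 // alg2 // hR mul1r.
rewrite mu_termE /tm -!(intrM, intrB, intrD) alg5 //.
case: eqP => // /eqP hAB; congr (_%:E).
by rewrite alg4.
Qed.


Lemma tm_le (w d den a : R) : 0 < w -> 0 < d -> 0 <= den ->
  (tm w d den <= a%:E)%E = (w * d <= a * den).
Proof.
move=> w0 d0 den0; rewrite /tm; case: eqP => [->|/eqP dn].
  by rewrite leye_eq /= mulr0 lt_geF // mulr_gt0.
by rewrite lee_fin ler_pdivrMr // lt_neqAle eq_sym dn.
Qed.

Lemma W_eq (al t al0 t0 s' t' : int) : (al %% n)%Z = (al0 %% n)%Z -> (t %% n)%Z = (t0 %% n)%Z ->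
  gcdn (absz (t'*al + s'*t)) n = gcdn (absz (t'*al0 + s'*t0)) n.
Proof.
move=> ha ht.
have -> : t'*al + s'*t = ((t' * (divz al n - divz al0 n) + s' * (divz t n - divz t0 n)) * n%:Z) + (t'*al0 + s'*t0).
  rewrite {1}(divz_eq al n) {1}(divz_eq t n) ha ht.
  rewrite {3}(divz_eq al0 n) {3}(divz_eq t0 n); ring.
have gz x : gcdz x n%:Z = (gcdn (absz x) n)%:Z by [].
apply/eqP; rewrite -eqz_nat -!gz.
by rewrite gcdzC gcdzMDl gcdzC.
Qed.


Lemma alg6 (w w1 G d D : R) : 0 < D -> 1 <= G -> 0 <= d -> 0 <= w1 -> w <= G * w1 ->
  w * d / (G * G * D) <= w1 * d / D.
Proof.
move=> D0 G1 d0 w10 h.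
have G0 : 0 < G by apply: lt_le_trans G1; exact: ltr01.
have -> : w * d / (G * G * D) = (w / (G * G)) * (d / D).
  by field; rewrite gt_eqF // gt_eqF.
rewrite -[w1 * d / D]mulrA; apply: ler_wpM2r; first by rewrite divr_ge0 // ltW.
rewrite ler_pdivrMr ?mulr_gt0 //.
have h2 : 1 * (G * w1) <= G * (G * w1) by apply: ler_wpM2r => //; rewrite mulr_ge0 // ltW.
rewrite mul1r in h2; have -> : w1 * (G * G) = G * (G * w1) by ring.
exact: le_trans h h2.
Qed.

Lemma prim (x x' : R) (s t : int) : (0 < n)%N -> (s,t) != (0,0) ->
  (forall s t : int, (s,t) != (0,0) -> `|s%:~R - t%:~R*x| * `|s%:~R - t%:~R*x'| != 0) ->
  exists s1 t1 : int, gcdz s1 t1 = 1 /\ (s1,t1) != (0,0) /\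
    (mu_term n x x' s t <= mu_term n x x' s1 t1)%E.
Proof.
move=> n0 st0 Hden.
set gn := gcdn `|s|%N `|t|%N.
have gE : gcdz s t = gn%:Z by [].
have gn0 : (0 < gn)%N.
  rewrite lt0n; apply/negP => /eqP h.
  have /eqP : gcdz s t = 0 by rewrite gE h.
  by rewrite gcdz_eq0 => /andP[/eqP s0 /eqP t0]; move: st0; rewrite s0 t0 eqxx.
set s1 := (s %/ gn%:Z)%Z; set t1 := (t %/ gn%:Z)%Z.
have hs : s = s1 * gn%:Z by rewrite /s1 divzK // -gE dvdz_gcdl.
have ht : t = t1 * gn%:Z by rewrite /t1 divzK // -gE dvdz_gcdr.
have cop : gcdz s1 t1 = 1.
  have gz0 : gn%:Z != 0 by rewrite eqz_nat -lt0n.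
  have := mulz_gcdl s1 t1 gn%:Z; rewrite -hs -ht gE /= => h.
  by apply: (mulIf gz0); rewrite mul1r.
have st1 : (s1, t1) != (0, 0).
  by apply: contra st0; rewrite hs ht => /eqP[-> ->]; rewrite !mul0r.
exists s1, t1; split => //; split => //.
rewrite !mu_termE /tm.
have D1 := Hden _ _ st1.
have G0 : 0 < gn%:R :> R by rewrite ltr0n.
have eG (y : R) : `|s%:~R - t%:~R * y| = gn%:R * `|s1%:~R - t1%:~R * y|.
  rewrite hs ht !intrM.
  have -> : s1%:~R * (gn%:Z)%:~R - t1%:~R * (gn%:Z)%:~R * y = (gn%:R : R) * (s1%:~R - t1%:~R * y).
    rewrite [(gn%:Z)%:~R]/=; ring.
  by rewrite normrM ger0_norm // ltW.
rewrite !eG.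
have -> : gn%:R * `|s1%:~R - t1%:~R * x| * (gn%:R * `|s1%:~R - t1%:~R * x'|) =
   (gn%:R * gn%:R) * (`|s1%:~R - t1%:~R * x| * `|s1%:~R - t1%:~R * x'|) :> R by ring.
rewrite mulf_eq0 (negPf D1) orbF mulf_eq0 orbb pnatr_eq0 (negPf (lt0n_neq0 gn0)) lee_fin.
apply: alg6 => //.
- by rewrite lt_neqAle eq_sym D1 mulr_ge0.
- by rewrite ler1n.
  rewrite -natrM ler_nat ht abszM absz_nat.
  apply: dvdn_leq; first by rewrite muln_gt0 gn0 gcdn_gt0 n0 orbT.
  rewrite muln_gcdr dvdn_gcd [(gn * _)%N]mulnC dvdn_gcdl /=.
  by rewrite dvdn_mull // dvdn_gcdr.
Qed.


Lemma alg7 (u v m s t x : R) : s - t * x != 0 ->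
  ((u + m * t) * x + (v - m * s)) / (s - t * x) = (u * x + v) / (s - t * x) - m.
Proof. by move=> h; field. Qed.

Lemma approx (x x' a e : R) : (0 < n)%N -> mu n x x' = a%:E -> 0 < e ->
  (forall s t : int, (s,t) != (0,0) -> `|s%:~R - t%:~R*x| * `|s%:~R - t%:~R*x'| != 0) ->
  exists s t al be : int, al*s + be*t = 1 /\ ((a - e)%:E < mu_term n x x' s t)%E /\
     0 <= (al%:~R*x + be%:~R)/(s%:~R - t%:~R*x) /\ (al%:~R*x + be%:~R)/(s%:~R - t%:~R*x) < 1.
Proof.
move=> n0 Hmu e0 Hden.
have h : ((a - e)%:E < mu n x x')%E by rewrite Hmu lte_fin gtrBl.
case/ereal_sup_gt: h => y [[s t] /= st0 <-] hy.
have [s1 [t1 [cop [st1 le1]]]] := prim n0 st0 Hden.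
have [u [v Bz]] := Bezoutz s1 t1.
rewrite cop in Bz.
have d0 : s1%:~R - t1%:~R * x != 0.
  by have := Hden _ _ st1; rewrite mulf_eq0 negb_or normr_eq0 => /andP[].
set y0 := (u%:~R * x + v%:~R) / (s1%:~R - t1%:~R * x).
exists s1, t1, (u + Num.floor y0 * t1), (v - Num.floor y0 * s1); split.
  by rewrite -Bz; ring.
split; first exact: lt_le_trans hy le1.
rewrite intrD intrB !intrM alg7 // -/y0.
have := floor_itv y0; rewrite intrD => /andP[h1 h2].
by rewrite subr_ge0 h1 ltrBlDl; split => //; rewrite addrC.
Qed.


Lemma uv_neq (x x' : R) (al be s0 t0 : int) :
  al*s0 + be*t0 = 1 -> s0%:~R - t0%:~R*x != 0 -> s0%:~R - t0%:~R*x' != 0 -> x != x' ->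
  (al%:~R*x + be%:~R)/(s0%:~R - t0%:~R*x) != (al%:~R*x' + be%:~R)/(s0%:~R - t0%:~R*x').
Proof.
move=> h dn dn' xx; rewrite -subr_eq0 alg2 //.
have -> : al%:~R * s0%:~R + be%:~R * t0%:~R = 1 :> R by rewrite -!intrM -intrD h.
by rewrite mul1r mulf_neq0 ?invr_eq0 ?mulf_neq0 // subr_eq0.
Qed.

Lemma inv_pair (al be s0 t0 s t : int) : al*s0 + be*t0 = 1 ->
  (s*s0 - t*be, t*al + s*t0) = (0,0) -> (s, t) = (0,0).
Proof.
move=> h [e1 e2].
have hs : s = al * (s*s0 - t*be) + be * (t*al + s*t0).
  by rewrite -[s in LHS]mulr1 -h; ring.
have ht : t = - t0 * (s*s0 - t*be) + s0 * (t*al + s*t0).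
  by rewrite -[t in LHS]mulr1 -h; ring.
rewrite e1 e2 !mulr0 addr0 in hs ht.
by rewrite hs ht.
Qed.

Lemma pair_back (al be s0 t0 S T : int) : al*s0 + be*t0 = 1 ->
  S = (al*S + be*T) * s0 - (- t0 * S + s0 * T) * be /\
  T = (- t0 * S + s0 * T) * al + (al*S + be*T) * t0.
Proof.
move=> h; split.
  by rewrite -[S in LHS]mulr1 -h; ring.
by rewrite -[T in LHS]mulr1 -h; ring.
Qed.

Lemma alg8a (A B S T y : R) : T * y + A != 0 ->
  S - T * ((S * y - B) / (T * y + A)) = (A * S + B * T) / (T * y + A).
Proof. by move=> h; field. Qed.

Lemma alg8b (A B S T y : R) : T * y + A != 0 ->
  A * ((S * y - B) / (T * y + A)) + B = (A * S + B * T) * y / (T * y + A).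
Proof. by move=> h; field. Qed.

Lemma back (al be s0 t0 : int) (y X : R) : al*s0 + be*t0 = 1 -> t0%:~R * y + al%:~R != 0 ->
  X = (s0%:~R * y - be%:~R) / (t0%:~R * y + al%:~R) ->
  s0%:~R - t0%:~R * X != 0 /\ (al%:~R * X + be%:~R) / (s0%:~R - t0%:~R * X) = y.
Proof.
move=> h c ->.
have hR : al%:~R * s0%:~R + be%:~R * t0%:~R = 1 :> R by rewrite -!intrM -intrD h.
rewrite alg8a // alg8b // hR !mul1r; split; first by rewrite invr_eq0.
by rewrite invrK divfK.
Qed.

Lemma transfer2 (x x' y y' : R) (al be s0 t0 s t : int) :
  al*s0 + be*t0 = 1 -> s0%:~R - t0%:~R*x != 0 -> s0%:~R - t0%:~R*x' != 0 ->
  y = (al%:~R*x + be%:~R)/(s0%:~R - t0%:~R*x) ->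
  y' = (al%:~R*x' + be%:~R)/(s0%:~R - t0%:~R*x') ->
  tm (gcdn (absz (t*al + s*t0)) n)%:R `|y - y'| (`|s%:~R - t%:~R*y| * `|s%:~R - t%:~R*y'|)
  = mu_term n x x' (s*s0 - t*be) (t*al + s*t0).
Proof. by move=> h dn dn' -> ->; apply: transfer. Qed.

Lemma keyinj (n' : nat) (p q : int) : n = n'.+1 ->
  inord (absz (p %% n)%Z) = inord (absz (q %% n)%Z) :> 'I_n'.+1 -> (p %% n)%Z = (q %% n)%Z.
Proof.
move=> en /(congr1 (@nat_of_ord _)); rewrite !inordK; first last.
- by rewrite -en -ltz_nat gez0_abs ?modz_ge0 ?ltz_pmod // en.
- by rewrite -en -ltz_nat gez0_abs ?modz_ge0 ?ltz_pmod // en.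
move=> e; have np : n%:Z != 0 by rewrite en.
by rewrite -(gez0_abs (modz_ge0 p np)) e gez0_abs // modz_ge0.
Qed.
Lemma tm10 (w d y y' : R) :
  tm w d (`|(1:int)%:~R - (0:int)%:~R * y| * `|(1:int)%:~R - (0:int)%:~R * y'|) = (w * d)%:E.
Proof. by rewrite /tm !mulr0z !mul0r !subr0 mulr1z normr1 mulr1 oner_eq0 divr1. Qed.
End S.
Unset Implicit Arguments.

Theorem proposition3p5 (R : realType) (n : nat) (hn : (0 < n)%N) (a : R) :
  a \in @Mset R n ->
  exists xi xi' : R, xi != xi' /\ mu n xi xi' = a%:E /\
    exists s t : int, (s, t) != (0, 0) /\ mu_term n xi xi' s t = a%:E.
Proof.
move=> /set_mem [x [x' [xx' Hmu]]].
have Hub : forall s t : int, (s,t) != (0,0) -> (mu_term n x x' s t <= a%:E)%E.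
  by move=> s t st; rewrite -Hmu; apply: ereal_sup_ubound; exists (s,t).
have Hden : forall s t : int, (s,t) != (0,0) ->
    `|s%:~R - t%:~R*x| * `|s%:~R - t%:~R*x'| != 0.
  move=> s t st; apply/negP => /eqP h0; have := Hub s t st.
  by rewrite mu_termE /tm h0 eqxx.
have xd : 0 < `|x - x'| by rewrite normr_gt0 subr_eq0.
have Wpos : forall m : int, 0 < (gcdn (absz m) n)%:R :> R.
  by move=> m; rewrite ltr0n gcdn_gt0 hn orbT.
have a0 : 0 < a.
  have := Hub 1 0 isT; rewrite mu_termE.
  by rewrite tm10 lee_fin => h; apply: lt_le_trans h; exact: mulr_gt0 (Wpos 0) xd.
have Hk : forall k : nat, exists q : (int * int) * (int * int),
    q.2.1 * q.1.1 + q.2.2 * q.1.2 = 1 /\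
    ((a - harmonic k)%:E < mu_term n x x' q.1.1 q.1.2)%E /\
    0 <= (q.2.1%:~R * x + q.2.2%:~R) / (q.1.1%:~R - q.1.2%:~R * x) /\
    (q.2.1%:~R * x + q.2.2%:~R) / (q.1.1%:~R - q.1.2%:~R * x) < 1.
  move=> k; have [s [t [al [be H]]]] := approx hn Hmu (harmonic_gt0 k) Hden.
  by exists ((s, t), (al, be)).
have [F HF] := choice Hk.
pose S k := (F k).1.1. pose T k := (F k).1.2.
pose AL k := (F k).2.1. pose BE k := (F k).2.2.
pose u k := ((AL k)%:~R * x + (BE k)%:~R) / ((S k)%:~R - (T k)%:~R * x).
pose v k := ((AL k)%:~R * x' + (BE k)%:~R) / ((S k)%:~R - (T k)%:~R * x').
have h1 k : AL k * S k + BE k * T k = 1 := (HF k).1.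
have st0 k : (S k, T k) != (0, 0).
  apply/eqP => -[e1 e2]; have := h1 k; rewrite e1 e2 !mulr0 addr0 => /eqP.
  by rewrite eq_sym oner_eq0.
have dk k : (S k)%:~R - (T k)%:~R * x != 0.
  by have := Hden _ _ (st0 k); rewrite mulf_eq0 negb_or !normr_eq0 => /andP[].
have dk' k : (S k)%:~R - (T k)%:~R * x' != 0.
  by have := Hden _ _ (st0 k); rewrite mulf_eq0 negb_or !normr_eq0 => /andP[].
have uvk k : u k != v k := uv_neq (h1 k) (dk k) (dk' k) xx'.
have trk k s' t' := transfer2 n s' t' (h1 k) (dk k) (dk' k) (erefl (u k)) (erefl (v k)).
have tr10 k : mu_term n x x' (S k) (T k) = ((gcdn (absz (T k)) n)%:R * `|u k - v k|)%:E.
  by have := trk k 1 0; rewrite tm10 !mul1r !mul0r subr0 add0r => ->.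
have Wk k : (gcdn (absz (T k)) n)%:R * `|u k - v k| <= a.
  by have := Hub _ _ (st0 k); rewrite tr10 lee_fin.
have uvle k : `|u k - v k| <= a.
  apply: le_trans (Wk k); apply: ler_peMl => //.
  by rewrite ler1n gcdn_gt0 hn orbT.
have hu k : `|u k| <= 1 + a.
  have [u0 u1] := (HF k).2.2.
  by rewrite ger0_norm //; apply: le_trans (ltW u1) _; rewrite lerDl ltW.
have hv k : `|v k| <= 1 + a.
  have [u0 u1] := (HF k).2.2.
  have -> : v k = u k - (u k - v k) by rewrite opprB addrC subrK.
  apply: le_trans (ler_normB _ _) _; apply: lerD => //.
  by rewrite ger0_norm // ltW.
have [n' en] : exists n', n = n'.+1 by exists n.-1; rewrite prednK.
pose key k : 'I_n'.+1 * 'I_n'.+1 := (inord (absz (AL k %% n)%Z), inord (absz (T k %% n)%Z)).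
have [phi [phge [phkey [l [l' [cu cv]]]]]] := extract key hu hv.
pose k0 := phi 0%N.
have Wsame k s' t' : gcdn (absz (t' * AL (phi k) + s' * T (phi k))) n =
    gcdn (absz (t' * AL k0 + s' * T k0)) n.
  move: (phkey k) => [/(keyinj en) e1 /(keyinj en) e2].
  exact: W_eq.
have C : forall s' t' : int, (s', t') != (0, 0) ->
    (gcdn (absz (t' * AL k0 + s' * T k0)) n)%:R * `|l - l'| <=
    a * (`|s'%:~R - t'%:~R * l| * `|s'%:~R - t'%:~R * l'|).
  move=> s' t' st'; apply: (lim_ineq cu cv) => k /=.
  rewrite -(Wsame k) -tm_le ?Wpos ?normr_gt0 ?subr_eq0 ?uvk ?mulr_ge0 //.
  rewrite trk; apply: Hub.
  apply/eqP => /(inv_pair (h1 _)) e; by rewrite e eqxx in st'.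
have W1 := gcdn (absz (T k0)) n.
have low : a <= (gcdn (absz (T k0)) n)%:R * `|l - l'|.
  have cw : (fun k => (gcdn (absz (T k0)) n)%:R * `|(u \o phi) k - (v \o phi) k|) @ \oo
      --> (gcdn (absz (T k0)) n)%:R * `|l - l'|.
    by apply: cvgMl_tmp; apply: cvg_norm; exact: cvgB.
  apply: (lim_ge cw) => k /=.
  have := (HF (phi k)).2.1; rewrite -/(S _) -/(T _) tr10 lte_fin ltrBlDr => h.
  have := Wsame k 1 0; rewrite !mul0r !add0r !mul1r => <-.
  apply: ltW; apply: lt_le_trans h _; apply: lerD => //.
  rewrite /harmonic /= lef_pV2 ?posrE ?ltr0n // ler_nat ltnS; exact: phge.
have up : (gcdn (absz (T k0)) n)%:R * `|l - l'| <= a.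
  have := C 1 0 isT; rewrite !mul0r !add0r !mul1r subr0 mulr1z normr1.
  by rewrite !mulr1.
have eqa : (gcdn (absz (T k0)) n)%:R * `|l - l'| = a by apply/le_anti; rewrite up low.
have ll : l != l'.
  by apply/eqP => e; move: eqa; rewrite e subrr normr0 mulr0 => e0; move: a0; rewrite -e0 ltxx.
have h0 := h1 k0.
have st' : (- AL k0, T k0) != (0, 0).
  apply/eqP => -[/eqP e1 e2]; move: e1; rewrite oppr_eq0 => /eqP e1.
  by move: h0; rewrite e1 e2 mul0r mulr0 addr0 => /eqP; rewrite eq_sym oner_eq0.
have lpos : 0 < (gcdn (absz (T k0 * AL k0 + - AL k0 * T k0)) n)%:R * `|l - l'|.
  by rewrite mulr_gt0 ?Wpos // normr_gt0 subr_eq0.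
have c0 : (T k0)%:~R * l + (AL k0)%:~R != 0.
  have := C _ _ st'; apply: contraTneq => e.
  rewrite intrN (_ : - (AL k0)%:~R - (T k0)%:~R * l = - ((T k0)%:~R * l + (AL k0)%:~R)); last by ring.
  by rewrite e oppr0 normr0 mul0r mulr0 -ltNge.
have c0' : (T k0)%:~R * l' + (AL k0)%:~R != 0.
  have := C _ _ st'; apply: contraTneq => e.
  rewrite intrN (_ : - (AL k0)%:~R - (T k0)%:~R * l' = - ((T k0)%:~R * l' + (AL k0)%:~R)); last by ring.
  by rewrite e oppr0 normr0 mulr0 mulr0 -ltNge.
pose X := ((S k0)%:~R * l - (BE k0)%:~R) / ((T k0)%:~R * l + (AL k0)%:~R).
pose X' := ((S k0)%:~R * l' - (BE k0)%:~R) / ((T k0)%:~R * l' + (AL k0)%:~R).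
have [d0 g0] := back h0 c0 (erefl X).
have [d0' g0'] := back h0 c0' (erefl X').
have tr s1 t1 := transfer2 n s1 t1 h0 d0 d0' (esym g0) (esym g0').
have att : mu_term n X X' (S k0) (T k0) = a%:E.
  by have := tr 1 0; rewrite tm10 !mul1r !mul0r subr0 add0r eqa => ->.
exists X, X'; split.
  apply/eqP => e; move/eqP: ll; apply; by rewrite -g0 -g0' e.
split; last by exists (S k0), (T k0); split => //; exact: st0.
apply/le_anti/andP; split; last first.
  by rewrite -att; apply: ereal_sup_ubound; exists (S k0, T k0) => //; exact: st0.
apply: ge_ereal_sup => z [[S' T'] /= stS <-].
have [eS eT] := pair_back S' T' h0.
move: (AL k0 * S' + BE k0 * T') (- T k0 * S' + S k0 * T') eS eT => s1 t1 eS eT.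
have st1 : (s1, t1) != (0, 0).
  apply: contra stS => /eqP [e1 e2].
  by rewrite eS eT e1 e2 !mul0r ?subr0 ?add0r ?addr0.
rewrite eS eT -tr tm_le ?Wpos ?mulr_ge0 ?normr_gt0 ?subr_eq0 //.
exact: C.
Qed.
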